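(* Let $X$ be a finite $T_0$-space and $G=\{g_1,\dots,g_m\}$ a finite group with $g_1$ the identity, and suppose $G$ acts freely on $X$ by homeomorphisms. Then (for a suitable labelling of $X$) $X_M$ is a block matrix $(A_{i,j})_{i,j=1,\dots,m}$ with each block $A_{i,j}$ of size $\frac{|X|}{m}\times\frac{|X|}{m}$, such that $A_{i,j}=A_{1,s}$ where $g_s=g_jg_i^{-1}$, for all $i,j=1,\dots,m$.
   Context: A finite $T_0$-space is identified with a finite poset via $x\le y$ iff $U_x\subseteq U_y$, where $U_x$ is the minimal open set containing $x$; homeomorphisms are order automorphisms. For a labelling $X=\{x_1,\dots,x_n\}$, $X_M=(x_{i,j})$ is the $n\times n$ matrix with $x_{i,j}=0$ if $x_i\le x_j$ and $x_{i,j}=1$ otherwise; a different labelling changes $X_M$ to $EX_ME^{-1}$ for a permutation matrix $E$. *)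

(* Defs.v *)
From HB Require Import structures.
From mathcomp Require Import all_boot all_order all_algebra all_fingroup.
Set Implicit Arguments. Unset Strict Implicit. Unset Printing Implicit Defensive.

(* A finite T0-space is identified with a finite poset (T, le). *)
Definition is_partial_order (T : finType) (le : rel T) : Prop :=
  [/\ reflexive le, antisymmetric le & transitive le].

Definition XM (T : finType) (le : rel T) (n : nat) (lab : 'I_n -> T) : 'M[nat]_n :=
  \matrix_(a < n, b < n) (if le (lab a) (lab b) then 0%N else 1%N).

(* The (a,b) entry of the (i,j) block (each block of size k x k) of an
   (m*k) x (m*k) matrix: row index i*k+a, column index j*k+b. *)
Definition block_entry (R : Type) (m k : nat) (M : 'M[R]_(m * k))
  (i j : 'I_m) (a b : 'I_k) : R :=
  M (mxvec_index i a) (mxvec_index j b).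

(* Main.v *)
Require Import Defs.
From HB Require Import structures.
From mathcomp Require Import all_boot all_order all_algebra all_fingroup.

Theorem mainTheorem17
  (T : finType) (le : rel T) (gT : finGroupType)
  (to : {action gT &-> T})
  (g : 'I_#|gT| -> gT) (i1 : 'I_#|gT|) :
  is_partial_order le ->
  (* the action is by homeomorphisms = order automorphisms *)
  (forall (a : gT) (x y : T), le (to x a) (to y a) = le x y) ->
  (* the action is free *)
  (forall (a : gT) (x : T), to x a = x -> a = 1%g) ->
  (* G = {g_1, ..., g_m} is an enumeration of G, with g_1 = identity *)
  bijective g -> g i1 = 1%g ->
  exists (k : nat) (lab : 'I_(#|gT| * k) -> T),
    bijective lab /\
    forall (i j s : 'I_#|gT|), g s = (g j * (g i)^-1)%g ->
      forall a b : 'I_k,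
        block_entry (XM le lab) i j a b = block_entry (XM le lab) i1 s a b.
Proof.
move=> _ Hle Hfree [ginv gK Kg] g1.
pose orb x := orbit to [set: gT] x.
pose rep x := odflt x [pick y in orb x].
have rep_in x : rep x \in orb x.
  rewrite /rep; case: pickP => [y|] //= _; exact: orbit_refl.
have rep_eq x y : orb x = orb y -> rep x = rep y.
  rewrite /rep => E; rewrite E; case: pickP => //= H.
  by have := H y; rewrite /= orbit_refl.
have rep_rep x : rep (rep x) = rep x.
  by apply: rep_eq; apply/orbit_eqP; exact: rep_in.
pose R : {set T} := [set x | rep x == x].
exists #|R|.
case: (@curry_mxvec_bij #|gT| #|R|) => h hK Kh.
pose F (p : 'I_#|gT| * 'I_#|R|) := to (enum_val p.2 : T) (g p.1).
pose lab p := F (h p).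
have labE i a : lab (mxvec_index i a) = to (enum_val a : T) (g i).
  by rewrite /lab (hK (i, a)).
exists lab; split; last first.
  move=> i j s Es a b; rewrite /block_entry /XM !mxE !labE g1 act1.
  by rewrite -(Hle ((g i)^-1)%g) actK -actM -Es.
have Finj : injective F.
  move=> [i a] [j b]; rewrite /F /= => E.
  have ER : forall c : 'I_#|R|, rep (enum_val c) = enum_val c.
    by move=> c; have := enum_valP c; rewrite inE => /eqP.
  have Eab : enum_val a = enum_val b :> T.
    rewrite -ER -(ER b); apply: rep_eq; apply/orbit_eqP.
    apply/orbitP; exists (g j * (g i)^-1)%g; first by rewrite inE.
    by rewrite actM -E actK.
  have eab := enum_val_inj Eab; subst b.
  have : to (enum_val a : T) (g i * (g j)^-1)%g = enum_val a.
    by rewrite actM E actK.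
  move/Hfree/eqP; rewrite mulg_eq1 invgK => /eqP Eg.
  by rewrite (can_inj gK Eg).
apply: inj_card_bij.
  by move=> p q /Finj E; rewrite -(Kh p) // -(Kh q) // E.
apply: (@leq_trans #|codom lab|); last exact: leq_image_card.
apply: subset_leq_card; apply/subsetP => x _.
have Rx : rep x \in R by rewrite inE rep_rep.
have : x \in orb (rep x) by rewrite orbit_sym rep_in.
case/orbitP => c _ Ec.
rewrite -Ec -(enum_rankK_in Rx Rx) -(Kg c) -labE.
exact: codom_f.
Qed.
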